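(* In any execution of \textsf{Murmur} (described in the context) in which the correct gossip network is connected, \textsf{Murmur} satisfies totality: if some correct process delivers a message, then every correct process eventually delivers a message.
   Context: System model: a fixed set $\Pi$ of processes, some Byzantine and the rest correct ($\Pi_C$ denotes the correct ones), communicating asynchronously over reliable authenticated point-to-point links (every message between correct processes is eventually delivered); signatures cannot be forged; a designated sender $\sigma$ with a public key. \textsf{Murmur} (parameter $G$): upon initialization each correct process samples $\bar G$ from a Poisson distribution with mean $G$, chooses $\bar G$ distinct processes uniformly at random as its gossip sample, and sends GossipSubscribe to each. Upon receiving GossipSubscribe from $\pi$, a correct process adds $\pi$ to its gossip sample and, if it has already set its variable $delivered$ to some (message, signature) pair, sends $\pi$ a Gossip message with that pair. Procedure dispatch(message, signature): if $delivered=\bot$, set $delivered$ to the pair, send a Gossip message with the pair to every process in the gossip sample, and deliver the message. The sender broadcasts $m$ by calling dispatch$(m,\mathrm{sign}_\sigma(m))$; upon receiving a Gossip message whose signature verifies against $\sigma$'s key, a correct process calls dispatch on it. The correct gossip network is the undirected graph with vertex set $\Pi_C$ in which correct $\pi,\rho$ are adjacent iff $\rho$ is eventually in $\pi$'s gossip sample (this relation is symmetric). *)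

(* Defs.v *)
From mathcomp Require Import all_boot.
From Stdlib Require Import Relations.
From Stdlib Require List.

Set Implicit Arguments.
Unset Strict Implicit.
Unset Printing Implicit Defensive.

Section Murmur.

(* P : the finite set of processes Pi; correct : the correct processes Pi_C;
   sigma : the designated sender; sign : sigma's signing function;
   verify m s : the signature s on m verifies against sigma's public key. *)
Variables (P : finType) (M Sg : Type).
Variable correct : {set P}.
Variable sigma : P.
Variable sign : M -> Sg.
Variable verify : M -> Sg -> bool.

Inductive NetMsg := GossipSubscribe | Gossip of (M * Sg).

Record LState := LS { ls_delivered : option (M * Sg); ls_sample : {set P} }.

(* A message in transit: (send time stamp, source, destination, content). *)
Definition Packet := (nat * P * P * NetMsg)%type.
Definition pk_src (r : Packet) : P := r.1.1.2.
Definition pk_dst (r : Packet) : P := r.1.2.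

Record Config := Cfg { cf_loc : P -> LState; cf_pool : seq Packet }.

Definition upd (f : P -> LState) (p : P) (s : LState) : P -> LState :=
  fun r => if r == p then s else f r.

Definition dispatch (n : nat) (c : Config) (p : P) (d : M * Sg) : Config :=
  let st := cf_loc c p in
  match ls_delivered st with
  | None => Cfg (upd (cf_loc c) p (LS (Some d) (ls_sample st)))
                (cf_pool c ++ [seq (n, p, q, Gossip d) | q <- enum (ls_sample st)])
  | Some _ => c
  end.

Definition handle (n : nat) (c : Config) (p src : P) (x : NetMsg) : Config :=
  match x with
  | GossipSubscribe =>
      let st := cf_loc c p in
      let loc' := upd (cf_loc c) p (LS (ls_delivered st) (src |: ls_sample st)) in
      match ls_delivered st with
      | Some d => Cfg loc' (cf_pool c ++ [:: (n, p, src, Gossip d)])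
      | None => Cfg loc' (cf_pool c)
      end
  | Gossip d => if verify d.1 d.2 then dispatch n c p d else c
  end.

Inductive Label :=
  | LIdle
  | LBcast of M
  | LRecv of nat                   (* the i-th message in transit is delivered by the link *)
  | LByz of P & P & NetMsg.        (* Byzantine src makes correct dst receive x *)

Definition valid (c : Config) (l : Label) : Prop :=
  match l with
  | LIdle => True
  | LBcast _ => sigma \in correct
  | LRecv i => exists r, List.nth_error (cf_pool c) i = Some r /\ pk_dst r \in correct
  | LByz src dst _ => src \notin correct /\ dst \in correct
  end.

Definition apply (n : nat) (c : Config) (l : Label) : Config :=
  match l with
  | LIdle => c
  | LBcast m => dispatch n c sigma (m, sign m)
  | LRecv i =>
      match List.nth_error (cf_pool c) i with
      | Some (_, src, dst, x) =>
          handle n (Cfg (cf_loc c) (take i (cf_pool c) ++ drop i.+1 (cf_pool c))) dst src x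
      | None => c
      end
  | LByz src dst x => handle n c dst src x
  end.

Definition init (S0 : P -> {set P}) : Config :=
  Cfg (fun p => LS None (S0 p))
      (flatten [seq [seq (0, p, q, GossipSubscribe) | q <- enum (S0 p)]
               | p <- enum correct]).

Definition execution (S0 : P -> {set P}) (c : nat -> Config) (lab : nat -> Label) : Prop :=
  c 0 = init S0 /\
  forall n, valid (c n) (lab n) /\ c n.+1 = apply n.+1 (c n) (lab n).

Definition reliable (c : nat -> Config) (lab : nat -> Label) : Prop :=
  forall n (r : Packet), List.In r (cf_pool (c n)) ->
    pk_src r \in correct -> pk_dst r \in correct ->
    exists k i, n <= k /\ lab k = LRecv i /\ List.nth_error (cf_pool (c k)) i = Some r.

(* correct gossip network: correct p, q adjacent iff q is eventually in p's sample *)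
Definition gossip_adj (c : nat -> Config) (p q : P) : Prop :=
  p \in correct /\ q \in correct /\ exists n, q \in ls_sample (cf_loc (c n) p).

Definition gossip_connected (c : nat -> Config) : Prop :=
  forall p q, p \in correct -> q \in correct -> clos_refl_sym_trans P (gossip_adj c) p q.

Definition delivers (c : nat -> Config) (p : P) : Prop :=
  exists n, ls_delivered (cf_loc (c n) p) <> None.

Definition totality (c : nat -> Config) : Prop :=
  (exists p, p \in correct /\ delivers c p) ->
  forall q, q \in correct -> delivers c q.

End Murmur.

(* Main.v *)
Require Import Defs.
From mathcomp Require Import all_boot.
From Stdlib Require Import Relations.
From Stdlib Require List.

Set Implicit Arguments.
Unset Strict Implicit.
Unset Printing Implicit Defensive.

Lemma In_cat T (x:T) s1 s2 : List.In x (s1 ++ s2) <-> List.In x s1 \/ List.In x s2.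
Proof. elim: s1 => [|a s IH] /=; [tauto|rewrite IH; tauto]. Qed.

Lemma map_List T U (f:T->U) s : map f s = List.map f s.
Proof. by elim: s => //= a s ->. Qed.

Lemma In_map T U (f:T->U) y s : List.In y (map f s) -> exists x, List.In x s /\ y = f x.
Proof. rewrite map_List => /List.in_map_iff [x [<- H]]; by exists x. Qed.

Lemma In_map2 T U (f:T->U) x s : List.In x s -> List.In (f x) (map f s).
Proof. rewrite map_List; exact: List.in_map. Qed.

Lemma In_mem (T:eqType) (x:T) s : x \in s -> List.In x s.
Proof.
elim: s => //= a s IH; rewrite in_cons => /orP [/eqP->|/IH]; [left|right] => //.
Qed.

Lemma In_flatten T (x:T) ss : List.In x (flatten ss) -> exists s, List.In s ss /\ List.In x s.
Proof.
elim: ss => //= s ss IH /In_cat [H|/IH [s' [H1 H2]]].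
  by exists s; split => //; left.
by exists s'; split => //; right.
Qed.

Lemma In_flatten2 T (x:T) s ss : List.In s ss -> List.In x s -> List.In x (flatten ss).
Proof.
elim: ss => //= a ss IH [->|H] Hx; apply/In_cat; [left|right; exact: IH].
done.
Qed.

Lemma In_rem T (x y:T) s i : List.nth_error s i = Some y -> List.In x s ->
  x = y \/ List.In x (take i s ++ drop i.+1 s).
Proof.
elim: s i => [|a s IH] [|i] //= Hn.
- case: Hn => <- [->|H]; [by left|by right; rewrite drop0].
- move=> [->|H]; first by right; left.
  case: (IH _ Hn H) => [->|H']; [by left|by right; right].
Qed.

Lemma In_rem2 T (x:T) s i : List.In x (take i s ++ drop i.+1 s) -> List.In x s.
Proof.
elim: s i => [|a s IH] [|i] //= H.
- by right; rewrite drop0 in H.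
- case: H => [->|H]; [by left|right; exact: (IH i)].
Qed.
Section Pf.
Variables (P : finType) (M Sg : Type) (correct : {set P}) (sigma : P)
  (sign : M -> Sg) (verify : M -> Sg -> bool).
Hypothesis sign_ok : forall m, verify m (sign m).

Notation Cf := (Config P M Sg).
Notation Sub := (@GossipSubscribe M Sg).
Definition del (c : Cf) x := ls_delivered (cf_loc c x).
Definition samp (c : Cf) x := ls_sample (cf_loc c x).

Lemma handle_spec n (c1 : Cf) p src x
  (V : forall y d, del c1 y = Some d -> verify d.1 d.2) :
  let c' := handle verify n c1 p src x in
  exists dp sp (nw : seq (Packet P M Sg)),
  [/\ (forall y, cf_loc c' y = if y == p then LS dp sp else cf_loc c1 y),
      cf_pool c' = cf_pool c1 ++ nw,
      (del c1 p <> None -> dp <> None) /\ (forall e, dp = Some e -> del c1 p = Some e \/ verify e.1 e.2),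
      (forall q, dp <> None -> q \in sp -> (del c1 p <> None /\ q \in samp c1 p) \/
           exists d, List.In (n,p,q,Gossip d) nw /\ verify d.1 d.2) &
      [/\ forall q, q \in sp -> q \in samp c1 p \/ (q = src /\ x = Sub),
          x = Sub -> src \in sp,
          forall d, x = Gossip d -> verify d.1 d.2 -> dp <> None,
          forall q, q \in samp c1 p -> q \in sp &
          forall r, List.In r nw -> exists a d, r = (n,p,a,Gossip d)]].
Proof.
rewrite /handle /del /samp.
case: x => [|d].
- case E: (ls_delivered (cf_loc c1 p)) => [d|].
  + exists (Some d), (src |: ls_sample (cf_loc c1 p)), [:: (n,p,src,Gossip d)].
    split.
    * move=> y /=; rewrite /upd; case: eqP => [Ey|] //; subst y; by case: (cf_loc c1 p) E.
    * by [].
    * split=> // e [<-]; by left.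
    * move=> q _; rewrite in_setU1 => /orP [/eqP->|H]; last by left.
      right; exists d; split; [by left|exact: (V p)].
    * split.
      - move=> q; rewrite in_setU1 => /orP [/eqP->|H]; [by right|by left].
      - by move=> _; rewrite setU11.
      - by move=> ? ?.
      - by move=> q H; rewrite in_setU1 H orbT.
      - by move=> r [<-|//]; exists src, d.
  + exists None, (src |: ls_sample (cf_loc c1 p)), [::].
    split.
    * move=> y /=; rewrite /upd; case: eqP => [Ey|] //; subst y; by case: (cf_loc c1 p) E.
    * by rewrite cats0.
    * split; [done | by move=> e].
    * by move=> q H; case: H.
    * split.
      - move=> q; rewrite in_setU1 => /orP [/eqP->|H]; [by right|by left].
      - by move=> _; rewrite setU11.
      - by move=> ? ?.
      - by move=> q H; rewrite in_setU1 H orbT.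
      - by [].
- case Vd: (verify d.1 d.2); last first.
    exists (ls_delivered (cf_loc c1 p)), (ls_sample (cf_loc c1 p)), [::].
    split.
    * move=> y /=; case: eqP => [Ey|] //; subst y; by case: (cf_loc c1 p).
    * by rewrite cats0.
    * split=> // e H; by left.
    * by move=> q H1 H2; left; split.
    * split.
      - by move=> q H; left.
      - by [].
      - by move=> d' [<-]; rewrite Vd.
      - by [].
      - by [].
  rewrite /dispatch.
  case E: (ls_delivered (cf_loc c1 p)) => [d'|].
    exists (Some d'), (ls_sample (cf_loc c1 p)), [::].
    split.
    * move=> y /=; case: eqP => [Ey|] //; subst y; by case: (cf_loc c1 p) E => ? ? /= ->.
    * by rewrite cats0.
    * split=> // e H; by left.
    * by move=> q H1 H2; left; split.
    * split.
      - by move=> q H; left.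
      - by [].
      - by move=> ? ? ?.
      - by [].
      - by [].
  exists (Some d), (ls_sample (cf_loc c1 p)),
    [seq (n, p, q, Gossip d) | q <- enum (ls_sample (cf_loc c1 p))].
  split.
  * move=> y /=; rewrite /upd; case: eqP => [Ey|] //; subst y; by case: (cf_loc c1 p) E.
  * by [].
  * split=> // e [<-]; by right; rewrite Vd.
  * move=> q _ H; right; exists d; split; last by rewrite Vd.
    apply: (In_map2 (fun q => (n, p, q, Gossip d))); apply: In_mem; by rewrite mem_enum.
  * split.
    - by move=> q H; left.
    - by [].
    - by move=> ? ? ?.
    - by [].
    - by move=> r /(@In_map _ _ (fun q => (n, p, q, Gossip d))) [a [_ ->]]; exists a, d.
Qed.

Definition Inv (c : Cf) : Prop :=
  (forall x d, del c x = Some d -> verify d.1 d.2) /\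
  (forall t s a, List.In (t,s,a,Sub) (cf_pool c) -> a \in samp c s) /\
  (forall p q, p \in correct -> q \in correct -> q \in samp c p ->
     p \in samp c q \/ exists t, List.In (t,p,q,Sub) (cf_pool c)) /\
  (forall p q, p \in correct -> q \in correct -> del c p <> None -> q \in samp c p ->
     del c q <> None \/ exists t d, List.In (t,p,q,Gossip d) (cf_pool c) /\ verify d.1 d.2).

Definition Step (c c' : Cf) : Prop :=
  (forall x, del c x <> None -> del c' x <> None) /\
  (forall x y, y \in samp c x -> y \in samp c' x).

Lemma gstep n (c c1 : Cf) p src x t0 :
  Inv c -> cf_loc c1 = cf_loc c ->
  (forall r, List.In r (cf_pool c1) -> List.In r (cf_pool c)) ->
  (forall r, List.In r (cf_pool c) -> List.In r (cf_pool c1) \/ r = (t0,src,p,x)) ->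
  (x = Sub -> src \in correct -> List.In (t0,src,p,Sub) (cf_pool c)) ->
  Inv (handle verify n c1 p src x) /\ Step c (handle verify n c1 p src x).
Proof.
move=> [V [SA [SB G]]] Eloc Hsub Hrem Hsubs.
have V1 : forall y d, del c1 y = Some d -> verify d.1 d.2.
  by move=> y d; rewrite /del Eloc; exact: V.
move: (handle_spec n p src x V1) => /=.
set c' := handle verify n c1 p src x.
move=> [dp [sp [nw [Hloc Hpool [Hd1 Hd2] Hnew [Hs1 Hs2 Hs3 Hs5 Hs4]]]]].
have delE : forall y, del c' y = if y == p then dp else del c y.
  by move=> y; rewrite /del Hloc; case: eqP => // _; rewrite Eloc.
have sampE : forall y, samp c' y = if y == p then sp else samp c y.
  by move=> y; rewrite /samp Hloc; case: eqP => // _; rewrite Eloc.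
have ST : Step c c'.
  split.
  - move=> y; rewrite delE; case: eqP => [->|] // H; apply: Hd1; by rewrite /del Eloc.
  - move=> y q; rewrite sampE; case: eqP => [->|] // H; apply: Hs5; by rewrite /samp Eloc.
have inP : forall r, List.In r (cf_pool c1) -> List.In r (cf_pool c').
  by move=> r H; rewrite Hpool; apply/In_cat; left.
have inN : forall r, List.In r nw -> List.In r (cf_pool c').
  by move=> r H; rewrite Hpool; apply/In_cat; right.
split=> //.
case: ST => [STd STs].
split; last split; last split.
- move=> y e; rewrite delE; case: eqP => [_|_]; last exact: V.
  by move=> /Hd2 [/V1|].
- move=> t s a; rewrite Hpool => /In_cat [/Hsub /SA /STs //|/Hs4 [a' [d' E]]].
  by case: E.
- move=> p' q Hp' Hq.
  have H1 : q \in samp c' p' -> q \in samp c p' \/ (p' = p /\ q = src /\ x = Sub).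
    rewrite sampE; case: eqP => [->|]; last by left.
    by move=> /Hs1 [|[-> ->]]; [rewrite /samp -Eloc; left|right].
  move=> /H1 [H|[E1 [E2 E3]]].
  + case: (SB _ _ Hp' Hq H) => [/STs|[t /Hrem [/inP|]]]; first by left.
    * by right; exists t.
    * case=> _ -> -> Ex; left; rewrite sampE eqxx; exact: Hs2 (esym Ex).
  + subst; left; apply: STs; apply: (SA t0); exact: Hsubs.
- move=> p' q Hp' Hq Hd Hs.
  have H1 : (del c p' <> None /\ q \in samp c p') \/
             exists d, List.In (n,p',q,Gossip d) nw /\ verify d.1 d.2.
    move: Hd Hs; rewrite delE sampE; case: eqP => [->|]; last by left.
    by move=> Hd Hs; case: (Hnew _ Hd Hs) => [[]|]; [rewrite /del /samp -!Eloc; left|right].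
  case: H1 => [[Hd' Hs']|[d [Hin Hv]]]; last by right; exists n, d; split => //; exact: inN.
  case: (G _ _ Hp' Hq Hd' Hs') => [/STd|[t [d [/Hrem [/inP Hin|Eq] Hv]]]]; first by left.
  + by right; exists t, d.
  + case: Eq => _ _ -> Ex; left; rewrite delE eqxx; exact: (Hs3 d).
Qed.

Lemma Step_refl c : Step c c.
Proof. by split. Qed.

Lemma Step_trans c1 c2 c3 : Step c1 c2 -> Step c2 c3 -> Step c1 c3.
Proof. move=> [A B] [C D]; split; auto. Qed.

Lemma astep n (c : Cf) l : Inv c -> valid correct sigma c l ->
  Inv (apply sigma sign verify n c l) /\ Step c (apply sigma sign verify n c l).
Proof.
move=> I; case: l => [|m|i|src dst x] /=.
- by move=> _; split => //; exact: Step_refl.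
- move=> _.
  have -> : dispatch n c sigma (m, sign m) = handle verify n c sigma sigma (Gossip (m, sign m)).
    by rewrite /= sign_ok.
  apply: (@gstep n c c sigma sigma _ 0) => //; by move=> r H; left.
- move=> [r [Hr _]]; rewrite Hr.
  move: r Hr => [[[t src] dst] x] Hr.
  apply: (@gstep n c _ dst src x t) => //=.
  + by move=> r H; apply: In_rem2 H.
  + move=> r H; case: (In_rem Hr H) => [->|]; by [right|left].
  + move=> Ex _; rewrite -Ex; exact: List.nth_error_In Hr.
- move=> [Hs _].
  apply: (@gstep n c c dst src x 0) => //.
  + by move=> r H; left.
  + by move=> _ Hc; move: Hs; rewrite Hc.
Qed.

End Pf.

Lemma mem_In (T:eqType) (x:T) s : List.In x s -> x \in s.
Proof. elim: s => //= a s IH [->|/IH H]; by rewrite in_cons ?eqxx ?H ?orbT. Qed.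

Section Main.
Variables (P : finType) (M Sg : Type) (correct : {set P}) (sigma : P)
  (sign : M -> Sg) (verify : M -> Sg -> bool).
Hypothesis sign_ok : forall m, verify m (sign m).
Notation Cf := (Config P M Sg).
Notation Sub := (@GossipSubscribe M Sg).

Lemma recv_effect n (c : Cf) i t s d x :
  Inv correct verify c -> List.nth_error (cf_pool c) i = Some (t,s,d,x) ->
  let c' := apply sigma sign verify n c (LRecv P M Sg i) in
  (x = Sub -> s \in samp c' d) /\ (forall e, x = Gossip e -> verify e.1 e.2 -> del c' d <> None).
Proof.
move=> [V _] Hr /=; rewrite Hr.
set c1 := Cfg _ _.
have V1 : forall y e, del c1 y = Some e -> verify e.1 e.2 by exact: V.
move: (handle_spec n d s x V1) => /=.
move=> [dp [sp [nw [Hloc _ _ _ [_ Hs2 Hs3 _ _]]]]].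
rewrite /del /samp Hloc eqxx /=; split; [exact: Hs2|exact: Hs3].
Qed.

Lemma init_inv S0 : Inv correct verify (init M Sg correct S0).
Proof.
split; last split; last split.
- by move=> x e.
- move=> t s a /= H; case: (In_flatten H) => s' [H1 H2].
  move: H1 => /(@In_map _ _ (fun p => [seq (0, p, q0, Sub) | q0 <- enum (S0 p)])) [p [Hp Es]].
  subst s'; move: H2 => /(@In_map _ _ (fun q0 => (0, p, q0, Sub))) [q [Hq [_ -> ->]]].
  by rewrite /samp /= -mem_enum; apply: mem_In.
- move=> p q Hp Hq Hs; right; exists 0.
  apply: (@In_flatten2 _ _ [seq (0, p, q0, Sub) | q0 <- enum (S0 p)]).
    by apply: (@In_map2 _ _ (fun p => [seq (0, p, q0, Sub) | q0 <- enum (S0 p)])); apply: In_mem; rewrite mem_enum.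
  by apply: (@In_map2 _ _ (fun q0 => (0, p, q0, Sub))); apply: In_mem; rewrite mem_enum.
- by move=> p q _ _ H; case: H.
Qed.

End Main.

Theorem lemma2 (P : finType) (M Sg : Type) (correct : {set P}) (sigma : P)
  (sign : M -> Sg) (verify : M -> Sg -> bool)
  (sign_ok : forall m, verify m (sign m))
  (S0 : P -> {set P}) (c : nat -> Config P M Sg) (lab : nat -> Label P M Sg) :
  execution correct sigma sign verify S0 c lab ->
  reliable correct c lab ->
  gossip_connected correct c ->
  totality correct c.
Proof.
move=> [H0 Hs] Rel Conn.
have Iv : forall n, Inv correct verify (c n).
  elim => [|n IH]; first by rewrite H0; exact: init_inv.
  case: (Hs n) => Hv ->; exact: (astep sign_ok _ IH Hv).1.
have St : forall n, Step (c n) (c n.+1).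
  move=> n; case: (Hs n) => Hv ->; exact: (astep sign_ok _ (Iv n) Hv).2.
have Mono : forall n m, n <= m -> Step (c n) (c m).
  move=> n m /subnKC <-; elim: (m - n) => [|k IH]; first by rewrite addn0; exact: Step_refl.
  rewrite addnS; exact: Step_trans IH (St _).
have dirA : forall n p q, p \in correct -> q \in correct -> del (c n) p <> None ->
    q \in samp (c n) p -> exists k, del (c k) q <> None.
  move=> n p q Hp Hq Hd Hsm.
  case: (Iv n) => [_ [_ [_ G]]].
  case: (G _ _ Hp Hq Hd Hsm) => [H|[t [d [Hin Hv]]]]; first by exists n.
  case: (Rel n _ Hin Hp Hq) => [k [i [_ [Hl Hr]]]].
  exists k.+1; case: (Hs k) => _ ->; rewrite Hl.
  exact: ((recv_effect sigma sign k.+1 (Iv k) Hr).2 d erefl Hv).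
have dirB : forall n p q, p \in correct -> q \in correct ->
    q \in samp (c n) p -> exists k, p \in samp (c k) q.
  move=> n p q Hp Hq Hsm.
  case: (Iv n) => [_ [_ [SB _]]].
  case: (SB _ _ Hp Hq Hsm) => [H|[t Hin]]; first by exists n.
  case: (Rel n _ Hin Hp Hq) => [k [i [_ [Hl Hr]]]].
  exists k.+1; case: (Hs k) => _ ->; rewrite Hl.
  exact: ((recv_effect sigma sign k.+1 (Iv k) Hr).1 erefl).
have adj1 : forall p q n1 n2, p \in correct -> q \in correct ->
    del (c n1) p <> None -> q \in samp (c n2) p -> exists k, del (c k) q <> None.
  move=> p q n1 n2 Hp Hq Hd Hsm.
  apply: (dirA (maxn n1 n2) p q Hp Hq).
  - by apply: (Mono n1 _ (leq_maxl _ _)).1.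
  - by apply: (Mono n2 _ (leq_maxr _ _)).2.
have adj : forall p q, gossip_adj correct c p q -> (delivers c p <-> delivers c q).
  move=> p q [Hp [Hq [n2 Hsm]]]; split.
  - move=> [n1 Hd]; exact: (adj1 p q n1 n2).
  - move=> [n1 Hd]; case: (dirB _ _ _ Hp Hq Hsm) => k Hk.
    exact: (adj1 q p n1 k).
have crst : forall p q, clos_refl_sym_trans P (gossip_adj correct c) p q ->
    (delivers c p <-> delivers c q).
  move=> p q; elim => [x y /adj //|x|x y _ IH|x y z _ IH1 _ IH2]; tauto.
move=> [p [Hp Hd]] q Hq.
by apply/(crst p q (Conn p q Hp Hq)).
Qed.
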